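(* Let $R=k[x_1,x_2,x_3]$ and let $I$ be a homogeneous $\mathfrak m$-primary ideal of $R$. If some minimal generator of $I$ of degree $n$ equals $\ell s$ for a linear form $\ell$ and a socle generator $s$ for $I$, then $\beta_{2,n+1}(R/I)\ge2$.
   Context: $k$ is a field, $R$ has the standard grading, $\mathfrak m=(x_1,x_2,x_3)$, and $\beta_{i,j}(R/I)=\dim_k\operatorname{Tor}_i^R(R/I,k)_j$. The socle of $R/I$ is $(I:\mathfrak m)/I$; homogeneous elements $s_1,\dots,s_r\in R$ are socle generators for $I$ if their images minimally generate the socle of $R/I$. *)

(* Defs.v *)
From HB Require Import structures.
From mathcomp Require Import all_boot all_order all_algebra.
From mathcomp Require Import mpoly.

Set Implicit Arguments.
Unset Strict Implicit.
Unset Printing Implicit Defensive.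

Import GRing.Theory.
Local Open Scope ring_scope.

Section Defs.
Variable k : fieldType.
Local Notation R := {mpoly k[3]}.

Definition is_ideal (I : R -> Prop) : Prop :=
  I 0 /\ (forall f g, I f -> I g -> I (f + g)) /\ (forall r f, I f -> I (r * f)).

Definition homogeneous_ideal (I : R -> Prop) : Prop :=
  is_ideal I /\ forall f d, I f -> I (pihomog mdeg d f).

(* the homogeneous maximal ideal m = (x1,x2,x3) = polynomials with zero
   constant term *)
Definition in_m (f : R) : Prop := f@_0%MM = 0.

Definition m_primary (I : R -> Prop) : Prop :=
  is_ideal I /\ forall f, (exists e : nat, I (f ^+ e)) <-> in_m f.

Definition remove_at (G : seq R) (i : nat) : seq R := take i G ++ drop i.+1 G.

Definition generates (I : R -> Prop) (G : seq R) : Prop :=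
  forall f, I f <-> exists c : 'I_(size G) -> R, f = \sum_(i < size G) c i * G`_i.

Definition minimal_generator_of_degree (I : R -> Prop) (g : R) (n : nat) : Prop :=
  g \is n.-homog /\
  exists G : seq R,
    [/\ all (fun p => p \is homog mdeg) G, generates I G,
        (forall i, (i < size G)%N -> ~ generates I (remove_at G i)) & g \in G].

Definition colon_m (I : R -> Prop) (f : R) : Prop :=
  forall g, in_m g -> I (g * f).

(* the images of S in R/I generate the socle (I:m)/I as an R-module *)
Definition generates_socle (I : R -> Prop) (S : seq R) : Prop :=
  (forall f, f \in S -> colon_m I f) /\
  forall f, colon_m I f ->
    exists c : 'I_(size S) -> R, I (f - \sum_(i < size S) c i * S`_i).

Definition socle_generator (I : R -> Prop) (s : R) : Prop :=
  exists S : seq R,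
    [/\ all (fun p => p \is homog mdeg) S, generates_socle I S,
        (forall i, (i < size S)%N -> ~ generates_socle I (remove_at S i)) & s \in S].

(* ---------- graded free resolutions of R/I ----------
   F_i = (+)_{a < size (degs i)} R(- nth 0 (degs i) a).
   The differential F_{i+1} -> F_i sends the a-th basis vector of F_{i+1}
   to \sum_b D (i+1) a b * e_b.  The augmentation F_0 -> R/I sends the
   b-th basis vector to (the class of) e0 b. *)
Variables (degs : nat -> seq nat) (D : nat -> nat -> nat -> R) (e0 : nat -> R).

Definition rk i := size (degs i).
Definition dg i (a : nat) := nth 0%N (degs i) a.

Definition dmap i (v : 'I_(rk i.+1) -> R) : 'I_(rk i) -> R :=
  fun b => \sum_(a < rk i.+1) v a * D i.+1 a b.

Definition aug (v : 'I_(rk 0) -> R) : R := \sum_(b < rk 0) v b * e0 b.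

Definition graded_free_resolution (I : R -> Prop) : Prop :=
  [/\
      (forall b, (b < rk 0)%N -> e0 b \is (dg 0 b).-homog),
      (forall i a b, (a < rk i.+1)%N -> (b < rk i)%N ->
          D i.+1 a b \is (dg i.+1 a - dg i b)%N.-homog /\
          ((dg i.+1 a < dg i b)%N -> D i.+1 a b = 0)),
      (forall f, exists v, I (f - aug v)),
      (forall v, I (aug v) <-> exists u, forall b, v b = dmap u b) &
      (forall i (v : 'I_(rk i.+1) -> R),
          (forall b, dmap v b = 0) <-> exists u, forall b, v b = dmap u b)].

(* F (x)_R k : the differential F_{i+1} (x) k -> F_i (x) k, as a matrix
   acting on row vectors; entries are the images in k = R/m *)
Definition Tk i : 'M[k]_(rk i.+1, rk i) := \matrix_(a, b) (D i.+1 a b)@_0%MM.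

Definition Pdeg i (j : nat) : 'M[k]_(rk i) :=
  diag_mx (\row_a ((dg i a == j)%:R : k)).

Definition cycles i j : 'M[k]_(rk i) :=
  match i return 'M[k]_(rk i) with
  | 0 => Pdeg 0 j
  | i'.+1 => (Pdeg i'.+1 j :&: kermx (Tk i'))%MS
  end.

(* dim_k Tor_i^R(R/I, k)_j computed from the resolution:
   dim of degree-j homology of F (x)_R k at position i *)
Definition tor_dim i j : nat :=
  (\rank (cycles i j) - \rank (Pdeg i.+1 j *m Tk i))%N.

End Defs.

(* Main.v *)
Require Import Defs.
From HB Require Import structures.
From mathcomp Require Import all_boot all_order all_algebra.
From mathcomp Require Import mpoly.
From mathcomp Require Import ring zify.
Set Implicit Arguments. Unset Strict Implicit. Unset Printing Implicit Defensive.
Import GRing.Theory.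
Local Open Scope ring_scope.



Section LB.
Variable k : fieldType.


Lemma homog_c0 n e (p : {mpoly k[n]}) : p \is e.-homog -> (0 < e)%N -> p@_0 = 0.
Proof. by move=> h he; apply: (dhomog_nemf_coeff h); rewrite /= mdeg0 eq_sym -lt0n. Qed.

Lemma decomp0 n (p : {mpoly k[n]}) :
  exists q : 'I_n -> {mpoly k[n]}, p - (p@_0)%:MP = \sum_i 'X_i * q i.
Proof.
elim/mpolyind: p => [|c m p _ _ [q hq]].
  by exists (fun _ => 0); rewrite mcoeff0 mpolyC0 subr0 big1 // => i _; rewrite mulr0.
case: (m =P 0%MM) => [->|/eqP nz].
  exists q; rewrite -hq mcoeffD mcoeffZ mcoeffX eqxx mulr1 mpolyCD mpolyX0.
  rewrite alg_mpolyC; ring.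
have [i hi] : exists i, m i != 0%N.
  apply/existsP; apply: contraR nz => /existsPn h; apply/eqP/mnmP => j.
  by rewrite mnm0E; apply/eqP; rewrite (negbNE (h j)).
exists (fun j => q j + (if j == i then c *: 'X_[m - U_(i)] else 0)).
rewrite (eq_bigr (fun j => 'X_j * q j + (if j == i then 'X_j * (c *: 'X_[m - U_(i)]) else 0))); last first.
  by move=> j _; rewrite mulrDr; case: eqP => // _; rewrite mulr0.
rewrite big_split /= -big_mkcond big_pred1_eq -hq.
rewrite mcoeffD mcoeffZ mcoeffX (negbTE nz) mulr0 add0r.
rewrite -scalerAr mulrC -mpolyXD submK ?lep1mP //.
by rewrite [RHS]addrC addrA.
Qed.

End LB.


Section LC.
Variable k : fieldType.
Variable n : nat.
Local Notation R := {mpoly k[n]}.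
Variable lq : n.-tuple R.

Definition inK (f : R) := exists r : 'I_n -> R, f = \sum_i ('X_i - lq`_i) * r i.

Lemma inK0 : inK 0.
Proof. by exists (fun _ => 0); rewrite big1 // => i _; rewrite mulr0. Qed.

Lemma inKD f g : inK f -> inK g -> inK (f + g).
Proof.
move=> [r1 ->] [r2 ->]; exists (fun i => r1 i + r2 i).
by rewrite -big_split /=; apply: eq_bigr => i _; rewrite mulrDr.
Qed.

Lemma inKM a f : inK f -> inK (a * f).
Proof.
move=> [r ->]; exists (fun i => a * r i).
by rewrite mulr_sumr; apply: eq_bigr => i _; rewrite mulrCA.
Qed.

Lemma inKX i : inK ('X_i - lq`_i).
Proof.
exists (fun j => (j == i)%:R); rewrite (bigD1 i) //= eqxx mulr1 big1 ?addr0 //.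
by move=> j /negbTE ->; rewrite mulr0.
Qed.

Local Notation pi := (comp_mpoly lq).

Lemma inK_pi h : inK (h - pi h).
Proof.
pose P h := inK (h - pi h).
have PM : forall a b, P a -> P b -> P (a * b).
  move=> a b ha hb; rewrite /P rmorphM /=.
  have -> : a * b - pi a * pi b = a * (b - pi b) + pi b * (a - pi a) by ring.
  by apply: inKD; apply: inKM.
have P1 : P 1 by rewrite /P rmorph1 subrr; apply: inK0.
have PXm : forall m, P 'X_[m].
  move=> m; rewrite mpolyXE_id; apply: (big_ind P) => // i _.
  elim: (m i) => [|e ih]; first by rewrite expr0.
  rewrite exprS; apply: PM => //; rewrite /P comp_mpolyXU; exact: inKX.
elim/mpolyind: h => [|c m p _ _ hp]; first by rewrite /P raddf0 subr0; apply: inK0.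
rewrite raddfD /= opprD addrACA; apply: inKD => //.
rewrite comp_mpolyZ -scalerBr -mul_mpolyC; apply: inKM; exact: PXm.
Qed.

End LC.


Section LD.
Variable k : fieldType.
Local Notation R := {mpoly k[3]}.

Lemma size_remove (S : seq R) i : (i < size S)%N -> size (remove_at S i) = (size S).-1.
Proof.
move=> hi; rewrite /remove_at size_cat size_take hi size_drop.
lia.
Qed.

Lemma nth_remove (S : seq R) i j : (i < size S)%N -> (j < (size S).-1)%N ->
  (remove_at S i)`_j = S`_(bump i j).
Proof.
move=> hi hj; rewrite /remove_at nth_cat size_take hi /bump.
case: (ltnP j i) => h.
  by rewrite nth_take // leqNgt h add0n.
rewrite nth_drop; congr nth; rewrite /=; lia.
Qed.

Lemma sumLift (S : seq R) i (F : nat -> R) (hi : (i < size S)%N) :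
  \sum_(j < size S) F j * S`_j =
  F i * S`_i + \sum_(j < size (remove_at S i)) F (bump i j) * (remove_at S i)`_j.
Proof.
rewrite (bigD1_ord (Ordinal hi)) //=; congr (_ + _).
rewrite (size_remove hi).
by apply: eq_bigr => j _; rewrite nth_remove.
Qed.

Lemma ideal_sum (I : R -> Prop) T (c f : 'I_T -> R) :
  is_ideal I -> (forall j, I (f j)) -> I (\sum_j c j * f j).
Proof.
move=> [I0 [ID IM]] hf; apply: (big_ind I) => // j _; exact: IM.
Qed.

Lemma gen_mem (I : R -> Prop) (Gs : seq R) x : generates I Gs -> x \in Gs -> I x.
Proof.
move=> hg hx; apply/hg; have hi : (index x Gs < size Gs)%N by rewrite index_mem.
exists (fun j => (val j == index x Gs)%:R).
rewrite (bigD1 (Ordinal hi)) //= eqxx mul1r nth_index // big1 ?addr0 //.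
by move=> j hj; rewrite (_ : (val j == _) = false) ?mul0r //; apply/negbTE; apply: contra hj => /eqP h; apply/eqP/val_inj.
Qed.


Definition ext m (c : 'I_m -> R) (j : nat) : R :=
  match (insub j : option 'I_m) with Some o => c o | None => 0 end.

Lemma extE m (c : 'I_m -> R) (j : 'I_m) : ext c j = c j.
Proof. by rewrite /ext valK. Qed.

Lemma sum_ext m (c : 'I_m -> R) (f : 'I_m -> R) :
  \sum_(j < m) c j * f j = \sum_(j < m) ext c j * f j.
Proof. by apply: eq_bigr => j _; rewrite extE. Qed.

Lemma mcoeff_pihomog d (p : R) m :
  (pihomog mdeg d p)@_m = if mdeg m == d then p@_m else 0.
Proof.
case: eqP => [<-|/eqP ne]; last first.
  exact: (dhomog_nemf_coeff (pihomogP mdeg d p) ne).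
have hK : (mmeasure mdeg p <= maxn (mmeasure mdeg p) (mdeg m).+1)%N by rewrite leq_maxl.
rewrite [in RHS](pihomog_partitionE hK) [RHS]raddf_sum /=.
have lt : (mdeg m < maxn (mmeasure mdeg p) (mdeg m).+1)%N by rewrite leq_max ltnSn orbT.
rewrite (bigD1 (Ordinal lt)) //= big1 ?addr0 // => i ne.
apply: (dhomog_nemf_coeff (pihomogP mdeg _ _)).
by apply: contra ne => /eqP h; apply/eqP/val_inj => /=.
Qed.

Lemma pihomogM e d (q p : R) : q \is e.-homog ->
  pihomog mdeg d (q * p) = if (e <= d)%N then q * pihomog mdeg (d - e) p else 0.
Proof.
move=> hq.
set K := maxn (mmeasure mdeg p) d.+1.
have hK : (mmeasure mdeg p <= K)%N by rewrite leq_maxl.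
rewrite {1}(pihomog_partitionE hK) mulr_sumr raddf_sum /=.
have E : forall i : 'I_K, pihomog mdeg d (q * pihomog mdeg i p) =
   if (e + i == d)%N then q * pihomog mdeg i p else 0.
  move=> i; case: eqP => [h|/eqP h].
    by rewrite pihomog_dE // -h; apply: dhomogM => //; apply: pihomogP.
  by rewrite (@pihomog_ne0 _ _ _ (e + i)%N d) //; apply: dhomogM => //; apply: pihomogP.
rewrite (eq_bigr _ (fun i _ => E i)) -big_mkcond /=.
case: leqP => [le|lt].
  have lt2 : (d - e < K)%N by rewrite leq_max; apply/orP; right; rewrite ltnS leq_subr.
  rewrite (big_pred1 (Ordinal lt2)) // => i /=.
  apply/eqP/eqP => [h|[->]]; first by apply: val_inj => /=; rewrite -h addKn.
  by rewrite subnKC.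
rewrite big_pred0 // => i; apply/negbTE; rewrite neq_ltn; apply/orP; right.
by apply: leq_trans (leq_addr _ _).
Qed.

Lemma c0M (p q : R) : (p * q)@_0 = p@_0 * q@_0.
Proof. exact: (rmorphM (mcoeff 0%MM)). Qed.

Lemma pihomog0_c0 (p : R) : p@_0 = 0 -> pihomog mdeg 0 p = 0.
Proof.
move=> h; apply/mpolyP => m; rewrite mcoeff_pihomog mcoeff0.
by case: eqP => // /eqP; rewrite mdeg_eq0 => /eqP ->.
Qed.

Lemma nakayama (I : R -> Prop) (G : R) (n : nat) T (mu a : 'I_T -> R) :
  is_ideal I -> minimal_generator_of_degree I G n ->
  (forall t, (mu t)@_0 = 0) -> (forall t, I (a t)) ->
  G = \sum_t mu t * a t -> False.
Proof.
move=> hI [hG [Gs [hom gen mini inG]]] hmu ha hGe.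
set i := index G Gs.
have hi : (i < size Gs)%N by rewrite index_mem.
have GsiE : Gs`_i = G by rewrite nth_index.
have [c hc] : exists c : 'I_T -> 'I_(size Gs) -> R,
    forall t, a t = \sum_(j < size Gs) c t j * Gs`_j.
  apply: (@fin_all_exists _ (fun _ => 'I_(size Gs) -> R) (fun t c => a t = \sum_(j < size Gs) c j * Gs`_j)) => t.
  by apply/(gen (a t)).
pose C t := ext (c t).
pose nu j := \sum_t mu t * C t j.
have hnu0 : forall j, (nu j)@_0 = 0.
  move=> j; rewrite /nu raddf_sum big1 // => t _; rewrite /= c0M hmu mul0r //.
have GE : G = \sum_(j < size Gs) nu j * Gs`_j.
  rewrite hGe /nu; under eq_bigr do rewrite hc mulr_sumr.
  rewrite exchange_big /=; apply: eq_bigr => j _; rewrite mulr_suml.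
  by apply: eq_bigr => t _; rewrite /C extE mulrA.
pose e j := if j == i then n else (mmeasure mdeg Gs`_j).-1.
have he : forall j, (j < size Gs)%N -> Gs`_j \is (e j).-homog.
  move=> j hj; rewrite /e; case: eqP => [->|_]; first by rewrite GsiE.
  by rewrite -homog_msize; apply: (allP hom); apply: mem_nth.
pose nu' j := if (e j <= n)%N then pihomog mdeg (n - e j) (nu j) else 0.
have hnu'i : nu' i = 0 by rewrite /nu' /e eqxx leqnn subnn pihomog0_c0.
have GE' : G = \sum_(j < size Gs) nu' j * Gs`_j.
  rewrite -{1}(pihomog_dE hG) {1}GE raddf_sum /=; apply: eq_bigr => j _.
  by rewrite mulrC (@pihomogM (e j) n _ (nu j) (he j (ltn_ord j))) /nu'; case: ifP; rewrite ?mul0r // mulrC.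
rewrite (sumLift _ hi) hnu'i mul0r add0r in GE'.
apply: (mini i hi) => f; split.
  move/(gen f) => [cf ->]; rewrite (sum_ext cf) (sumLift _ hi) GsiE [in X in _ * X]GE' mulr_sumr -big_split /=.
  exists (fun r => ext cf (bump i r) + ext cf i * nu' (bump i r)).
  by apply: eq_bigr => r _; rewrite mulrDl mulrA addrC.
move=> [cf ->]; apply: ideal_sum => // r.
apply: (gen_mem gen); have : (remove_at Gs i)`_r \in remove_at Gs i by apply: mem_nth.
by rewrite /remove_at mem_cat => /orP [/mem_take | /mem_drop].
Qed.

End LD.


Lemma rank_step (F : fieldType) p q m (C : 'M[F]_(p, m)) (Bm : 'M[F]_(q, m)) (y2 y3 : 'rV[F]_m) :
  (y2 <= C)%MS -> (y3 <= C)%MS -> (Bm <= C)%MS ->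
  (forall (a b : F) (z : 'rV_q), a *: y2 + b *: y3 = z *m Bm -> a = 0 /\ b = 0) ->
  (2 <= \rank C - \rank Bm)%N.
Proof.
move=> h2 h3 hB hind.
pose Y : 'M[F]_(2, m) := \matrix_(i < 2, c < m) (if i == 0 then y2 0 c else y3 0 c).
have YE : forall x : 'rV_2, x *m Y = x 0 0 *: y2 + x 0 1 *: y3.
  move=> x; apply/rowP => c; rewrite !mxE big_ord_recr big_ord_recr big_ord0 /= !mxE /=.
  by rewrite add0r; congr (x 0 _ * _ + x 0 _ * _); apply: val_inj.
have key : forall x : 'rV_2, (x *m Y <= Bm)%MS -> x = 0.
  move=> x /submxP [z hz]; have [] := hind (x 0 0) (x 0 1) z; first by rewrite -YE.
  move=> e0 e1; apply/rowP => j; rewrite mxE.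
  case: j => [[|[|j]] hj] //.
  - by rewrite (_ : Ordinal hj = 0) //; apply: val_inj.
  - by rewrite (_ : Ordinal hj = 1) //; apply: val_inj.
have rowz : forall r (M : 'M[F]_(r, m)), (M <= Y)%MS -> (M <= Bm)%MS -> M = 0.
  move=> r M /submxP [X ->] hMB; apply/row_matrixP => i; rewrite row0 row_mul.
  rewrite (key (row i X)) ?mul0mx //; rewrite -row_mul.
  exact: submx_trans (row_sub _ _) hMB.
have cap0 : \rank (Y :&: Bm)%MS = 0%N.
  by apply/eqP; rewrite mxrank_eq0; apply/eqP; apply: rowz; [exact: capmxSl | exact: capmxSr].
have rY : \rank Y = 2%N.
  have k0 : kermx Y = 0.
    apply/row_matrixP => i; rewrite row0; apply: key.
    have : (row i (kermx Y) <= kermx Y)%MS by exact: row_sub.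
    by rewrite sub_kermx => /eqP ->; exact: sub0mx.
  have := mxrank_ker Y; rewrite k0 mxrank0 => /esym/eqP; rewrite subn_eq0 => h.
  by apply/eqP; rewrite eqn_leq h rank_leq_row.
have YC : (Y <= C)%MS.
  apply/row_subP => i; rewrite (_ : row i Y = if i == 0 then y2 else y3).
    by case: ifP.
  by apply/rowP => c; rewrite !mxE; case: ifP.
have := mxrank_sum_cap Y Bm; rewrite cap0 rY addn0 => hs.
have hYB : (Y + Bm <= C)%MS by rewrite addsmx_sub YC hB.
have := mxrankS hYB; move: hs; lia.
Qed.


Section LF.
Variable k : fieldType.

Lemma sum3 (V : nmodType) (F : 'I_3 -> V) : \sum_i F i = F 0 + F 1 + F 2.
Proof.
rewrite !big_ord_recr big_ord0 /= add0r.
by congr (F _ + F _ + F _); apply: val_inj.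
Qed.

Lemma solve2 (a b : k) : (a != 0) || (b != 0) -> exists x y, a * x + b * y = 1.
Proof.
case: (eqVneq a 0) => [->|ha] /= hb.
  by exists 0, b^-1; rewrite mul0r add0r divff.
by exists a^-1, 0; rewrite mulr0 addr0 divff.
Qed.

Lemma lin3 (a : 'I_3 -> k) : exists j1 j2 : 'I_3, j1 != j2 /\
  forall al be : k, (al != 0) || (be != 0) ->
  exists p : 'I_3 -> k, \sum_i a i * p i = 0 /\ al * p j1 + be * p j2 = 1.
Proof.
case: (eqVneq (a 0) 0) => h0; last first.
  exists 1, 2; split => // al be /solve2 [x [y hxy]].
  exists (fun i : 'I_3 => if i == 0 then - (a 1 * x + a 2 * y) / a 0 else if i == 1 then x else y).
  rewrite sum3 /=; split => //; field; exact: h0.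
case: (eqVneq (a 1) 0) => h1; last first.
  exists 0, 2; split => // al be /solve2 [x [y hxy]].
  exists (fun i : 'I_3 => if i == 0 then x else if i == 1 then - (a 2 * y) / a 1 else y).
  rewrite sum3 /= h0; split => //; field; exact: h1.
exists 0, 1; split => // al be /solve2 [x [y hxy]].
exists (fun i : 'I_3 => if i == 0 then x else if i == 1 then y else 0).
by rewrite sum3 /= h0 h1; split => //; ring.
Qed.

Lemma lin_decomp (l : {mpoly k[3]}) : l \is 1.-homog ->
  l = \sum_(i < 3) l@_U_(i) *: 'X_i.
Proof.
move=> hl; apply/mpolyP => m; rewrite raddf_sum /=.
under eq_bigr do rewrite mcoeffZ mcoeffX.
case: (boolP (mdeg m == 1%N)) => hm.
  case/mdeg1P: hm => i /eqP ->.
  rewrite (bigD1 i) //= eqxx mulr1 big1 ?addr0 // => j hj.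
  by rewrite eq_mnm1 (negbTE hj) mulr0.
rewrite (dhomog_nemf_coeff hl hm) big1 // => j _.
case: eqP => [e|]; last by rewrite mulr0.
by move: hm; rewrite -e mdeg1.
Qed.

End LF.


Section Res.
Variable k : fieldType.
Local Notation R := {mpoly k[3]}.
Variables (I : R -> Prop) (degs : nat -> seq nat) (D : nat -> nat -> nat -> R) (e0 : nat -> R).
Hypothesis hI : is_ideal I.
Hypothesis hres : graded_free_resolution degs D e0 I.

Local Notation rk := (rk degs).
Local Notation dg := (dg degs).
Local Notation dm i v := (@dmap k degs D i v).
Local Notation aug v := (@aug k degs e0 v).

Lemma dmapL i T (r : 'I_T -> R) (u : 'I_T -> 'I_(rk i.+1) -> R) b :
  dm i (fun a => \sum_t r t * u t a) b = \sum_t r t * dm i (u t) b.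
Proof.
rewrite /dmap; under eq_bigr do rewrite mulr_suml.
rewrite exchange_big /=; apply: eq_bigr => t _; rewrite mulr_sumr.
by apply: eq_bigr => a _; rewrite mulrA.
Qed.

Lemma dmapD i (u v : 'I_(rk i.+1) -> R) b :
  dm i (fun a => u a + v a) b = dm i u b + dm i v b.
Proof. by rewrite /dmap -big_split /=; apply: eq_bigr => a _; rewrite mulrDl. Qed.

Lemma dmapM i r (u : 'I_(rk i.+1) -> R) b :
  dm i (fun a => r * u a) b = r * dm i u b.
Proof. by rewrite /dmap mulr_sumr; apply: eq_bigr => a _; rewrite mulrA. Qed.

Lemma dmapN i (u : 'I_(rk i.+1) -> R) b :
  dm i (fun a => - u a) b = - dm i u b.
Proof. by rewrite /dmap -sumrN; apply: eq_bigr => a _; rewrite mulNr. Qed.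

Lemma dmap_ext i (u v : 'I_(rk i.+1) -> R) b : (forall a, u a = v a) -> dm i u b = dm i v b.
Proof. by move=> h; rewrite /dmap; apply: eq_bigr => a _; rewrite h. Qed.

Lemma dd i (u : 'I_(rk i.+2) -> R) b : dm i (dm i.+1 u) b = 0.
Proof.
case: hres => _ _ _ _ hex.
by move: b; apply/(hex i (dm i.+1 u)); exists u.
Qed.

Lemma augdm (u : 'I_(rk 1) -> R) : I (aug (dm 0 u)).
Proof. by case: hres => _ _ _ hex0 _; apply/hex0; exists u. Qed.

Lemma augL T (r : 'I_T -> R) (u : 'I_T -> 'I_(rk 0) -> R) :
  aug (fun b => \sum_t r t * u t b) = \sum_t r t * aug (u t).
Proof.
rewrite /Defs.aug; under eq_bigr do rewrite mulr_suml.
rewrite exchange_big /=; apply: eq_bigr => t _; rewrite mulr_sumr.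
by apply: eq_bigr => a _; rewrite mulrA.
Qed.

Lemma augM r (u : 'I_(rk 0) -> R) : aug (fun b => r * u b) = r * aug u.
Proof. by rewrite /Defs.aug mulr_sumr; apply: eq_bigr => a _; rewrite mulrA. Qed.

Lemma augD (u v : 'I_(rk 0) -> R) : aug (fun b => u b + v b) = aug u + aug v.
Proof. by rewrite /Defs.aug -big_split /=; apply: eq_bigr => a _; rewrite mulrDl. Qed.

Lemma aug_ext (u v : 'I_(rk 0) -> R) : (forall a, u a = v a) -> aug u = aug v.
Proof. by move=> h; rewrite /Defs.aug; apply: eq_bigr => a _; rewrite h. Qed.

Lemma D0 i (a : 'I_(rk i.+1)) (b : 'I_(rk i)) : dg i.+1 a != dg i b -> (D i.+1 a b)@_0 = 0.
Proof.
case: hres => _ hD _ _ _ ne.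
have [hh hz] := hD i a b (ltn_ord a) (ltn_ord b).
case: (ltnP (dg i.+1 a) (dg i b)) => h; first by rewrite hz // mcoeff0.
apply: (homog_c0 hh); rewrite subn_gt0 ltn_neqAle h andbT eq_sym; exact: ne.
Qed.

Definition H i d (v : 'I_(rk i) -> R) : 'I_(rk i) -> R :=
  fun a => if (dg i a <= d)%N then pihomog mdeg (d - dg i a) (v a) else 0.

Lemma H_dmap i d (u : 'I_(rk i.+1) -> R) b : dm i (H d u) b = H d (dm i u) b.
Proof.
case: hres => _ hD _ _ _.
rewrite /H /dmap; case: ifP => hb; last first.
  rewrite big1 // => a _; case: ifP => ha; last by rewrite mul0r.
  have [hh hz] := hD i a b (ltn_ord a) (ltn_ord b).
  by rewrite hz ?mulr0 //; apply: leq_ltn_trans ha _; rewrite ltnNge hb.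
rewrite raddf_sum /=; apply: eq_bigr => a _.
have [hh hz] := hD i a b (ltn_ord a) (ltn_ord b).
case: (ltnP (dg i.+1 a) (dg i b)) => hab.
  by rewrite hz // !mulr0 pihomog0 ?mul0r.
rewrite [in RHS]mulrC (pihomogM _ _ hh).
case: ifP => ha.
  rewrite ifT; last by lia.
  rewrite mulrC; congr (_ * pihomog _ _ _); lia.
rewrite ifF ?mul0r //; lia.
Qed.

Lemma H_aug d (v : 'I_(rk 0) -> R) : aug (H d v) = pihomog mdeg d (aug v).
Proof.
case: hres => he _ _ _ _.
rewrite /H /Defs.aug raddf_sum /=; apply: eq_bigr => b _.
rewrite [in RHS]mulrC (pihomogM _ _ (he b (ltn_ord b))).
by case: ifP => h; rewrite ?mul0r // mulrC.
Qed.

Lemma H_lin i d (q1 q2 : R) (v1 v2 : 'I_(rk i) -> R) a :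
  q1 \is 1.-homog -> q2 \is 1.-homog ->
  H d.+1 (fun a => q1 * v1 a - q2 * v2 a) a = q1 * H d v1 a - q2 * H d v2 a.
Proof.
move=> h1 h2; rewrite /H pihomogB (pihomogM _ _ h1) (pihomogM _ _ h2).
case: (leqP (dg i a) d) => h.
  have E1 : (1 <= d.+1 - dg i a)%N by lia.
  have E : (d.+1 - dg i a - 1 = d - dg i a)%N by lia.
  have h' : (dg i a <= d.+1)%N by lia.
  by rewrite h' E1 E.
case: (leqP (dg i a) d.+1) => h'; last by rewrite !mulr0 subrr.
have E1 : (1 <= d.+1 - dg i a)%N = false by lia.
by rewrite E1 !mulr0 subrr.
Qed.

Lemma H_ext i d (u v : 'I_(rk i) -> R) a : (forall a, u a = v a) -> H d u a = H d v a.
Proof. by move=> h; rewrite /H h. Qed.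


Definition ybar i d (y : 'I_(rk i) -> R) : 'rV[k]_(rk i) :=
  \row_c ((dg i c == d)%:R * (y c)@_0).
Arguments ybar : clear implicits.

Lemma ybar_sub i d y : (ybar i d y <= Pdeg k degs i d)%MS.
Proof.
have -> : ybar i d y = ybar i d y *m Pdeg k degs i d.
  apply/rowP => c; rewrite mul_mx_diag !mxE.
  by case: eqP => _; rewrite ?mul0r ?mulr0 // mul1r mulr1.
exact: submxMl.
Qed.

Lemma c0dmap i (y : 'I_(rk i.+1) -> R) a :
  (dm i y a)@_0 = \sum_c (y c)@_0 * (D i.+1 c a)@_0.
Proof. by rewrite /dmap raddf_sum; apply: eq_bigr => c _; rewrite /= c0M. Qed.

Lemma ybar_cyc i d (y : 'I_(rk i.+1) -> R) :
  (forall a, (dm i y a)@_0 = 0) -> ybar i.+1 d y *m Tk degs D i = 0.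
Proof.
move=> hy; apply/rowP => a; rewrite !mxE.
have := hy a; rewrite c0dmap => h.
case: (eqVneq (dg i a) d) => e.
  rewrite -[RHS]h; apply: eq_bigr => c _; rewrite !mxE.
  case: eqP => ec; first by rewrite mul1r.
  by rewrite (D0 (a:=c) (b:=a)) ?mulr0 //; apply/eqP; rewrite e; exact: ec.
rewrite big1 // => c _; rewrite !mxE.
case: eqP => ec; last by rewrite !mul0r.
by rewrite (D0 (a:=c) (b:=a)) ?mulr0 //; rewrite ec eq_sym.
Qed.

Lemma TkTk i : Tk degs D i.+1 *m Tk degs D i = 0.
Proof.
apply/matrixP => c a; rewrite !mxE.
pose u : 'I_(rk i.+2) -> R := fun c' => (c' == c)%:R.
have := dd u a; move/(congr1 (mcoeff 0)); rewrite mcoeff0 c0dmap => h.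
rewrite -[X in _ = X]h.
apply: eq_bigr => b _; rewrite !mxE; congr (_ * _).
rewrite /dmap (bigD1 c) //= /u eqxx mul1r big1 ?addr0 // => c' hc'.
by rewrite (negbTE hc') mul0r.
Qed.

Lemma Bm_sub i d : (Pdeg k degs i.+2 d *m Tk degs D i.+1 <= cycles degs D i.+1 d)%MS.
Proof.
rewrite /= sub_capmx; apply/andP; split.
  have -> : Pdeg k degs i.+2 d *m Tk degs D i.+1 =
      (Pdeg k degs i.+2 d *m Tk degs D i.+1) *m Pdeg k degs i.+1 d.
    apply/matrixP => c a; rewrite /Pdeg mul_mx_diag mul_diag_mx !mxE.
    case: (eqVneq (dg i.+1 a) d) => e; first by rewrite mulr1.
    rewrite mulr0; case: eqP => ec; last by rewrite mul0r.
    by rewrite (D0 (a:=c) (b:=a)) ?mulr0 // ec eq_sym.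

  exact: submxMl.
by rewrite sub_kermx -mulmxA TkTk mulmx0.
Qed.

End Res.


Section M.
Variable k : fieldType.
Local Notation R := {mpoly k[3]}.

Lemma nakayama4 (I : R -> Prop) (G : R) (n : nat) (mu a : 'I_3 -> R) (m b : R) :
  is_ideal I -> minimal_generator_of_degree I G n ->
  (forall t, (mu t)@_0 = 0) -> (forall t, I (a t)) -> m@_0 = 0 -> I b ->
  G = \sum_t mu t * a t + m * b -> False.
Proof.
move=> hI hG hmu ha hm hb hGe.
pose mu' (t : 'I_4) := if (t < 3)%N then mu (inord t) else m.
pose a' (t : 'I_4) := if (t < 3)%N then a (inord t) else b.
apply: (nakayama (mu := mu') (a := a') hI hG).
- by move=> t; rewrite /mu'; case: ifP.
- by move=> t; rewrite /a'; case: ifP.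
rewrite big_ord_recr /= /mu' /a' /= hGe; congr (_ + _).
by apply: eq_bigr => t _; rewrite ltn_ord; congr (mu _ * a _); apply: val_inj; rewrite /= inordK.
Qed.

Lemma in_m_X (i : 'I_3) : in_m ('X_i : R).
Proof. by rewrite /in_m mcoeffX mnm1_eq0. Qed.

Lemma idealN (I : R -> Prop) f : is_ideal I -> I f -> I (- f).
Proof. by move=> [_ [_ hM]] h; rewrite -mulN1r; apply: hM. Qed.


Lemma mainA (I : R -> Prop) (n : nat) (l s : R) degs D e0 :
  homogeneous_ideal I -> l \is 1.-homog -> colon_m I s ->
  minimal_generator_of_degree I (l * s) n ->
  graded_free_resolution degs D e0 I ->
  (2 <= tor_dim degs D 2 n.+1)%N.
Proof.
move=> [hI hIh] hl hs hG hres.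
have hI' := hI; case: hI' => I0 [ID IM].
have Gin : I (l * s) by case: hG => _ [Gs [_ gen _ inG]]; exact: gen_mem gen inG.
have [j1 [j2 [hj hp]]] := lin3 (fun i => l@_U_(i)).
have hX : forall i, I ('X_i * s) by move=> i; apply: hs; apply: in_m_X.
have hl0 : l@_0 = 0 by apply: homog_c0 hl _.
have hres' := hres; case: hres' => he0 hD hsurj hex0 hex.
have [v0 hv0] := hsurj s.
have hw : forall q : R, I (q * s) ->
    exists w : 'I_(rk degs 1) -> R, forall b, q * v0 b = dmap D w b.
  move=> q hq; apply/(hex0 (fun b => q * v0 b)).
  rewrite augM (_ : q * aug e0 v0 = q * s + - (q * (s - aug e0 v0))); last by ring.
  by apply: ID => //; apply: idealN => //; apply: IM.
have [wl hwl] := hw l Gin.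
have [w2 hw2] := hw _ (hX j1).
have [w3 hw3] := hw _ (hX j2).
have hy : forall (q : R) (wq : 'I_(rk degs 1) -> R), (forall b, q * v0 b = dmap D wq b) ->
    exists y : 'I_(rk degs 2) -> R, forall a, q * wl a - l * wq a = dmap D y a.
  move=> q wq hq; apply/(hex 0 (fun a => q * wl a - l * wq a)) => b.
  rewrite dmapD dmapN !dmapM -hq -hwl; ring.
have [y2 hy2] := hy _ _ hw2.
have [y3 hy3] := hy _ _ hw3.
have cyc : forall (q : R) (wq : 'I_(rk degs 1) -> R) (y : 'I_(rk degs 2) -> R),
    q@_0 = 0 -> (forall a, q * wl a - l * wq a = dmap D y a) ->
    (@ybar k degs 2 n.+1 y <= cycles degs D 2 n.+1)%MS.
  move=> q wq y hq0 hyq; rewrite /= sub_capmx ybar_sub /= sub_kermx.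
  apply/eqP; apply: (ybar_cyc hres) => a.
  by rewrite -hyq mcoeffB !c0M hq0 hl0 !mul0r subrr.
have hX0 : forall i : 'I_3, ('X_i : R)@_0 = 0 by move=> i; exact: in_m_X.
apply: (rank_step (cyc _ _ _ (hX0 j1) hy2) (cyc _ _ _ (hX0 j2) hy3) (Bm_sub hres 1 n.+1)).
move=> al be z hz.
case: (boolP ((al != 0) || (be != 0))) => hne; last first.
  by move: hne; rewrite negb_or !negbK => /andP [/eqP -> /eqP ->].
exfalso.
have [p [hpl hpl']] := hp al be hne.
pose l' : R := al%:MP * 'X_j1 + be%:MP * 'X_j2.
have hl'h : l' \is 1.-homog.
  by rewrite /l' !mul_mpolyC; apply: rpredD; apply: rpredZ; rewrite dhomogX /= mdeg1.
have hl'0 : l' != 0.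
  apply: contraTneq hne => e.
  have c1 := congr1 (mcoeff U_(j1)) e; have c2 := congr1 (mcoeff U_(j2)) e.
  move: c1 c2; rewrite /l' !mcoeffD !mcoeffCM !mcoeffXU !mcoeff0 eqxx (negbTE hj) eq_sym (negbTE hj).
  by rewrite eqxx !mulr0 !mulr1 addr0 add0r => -> ->; rewrite eqxx.
pose Z : 'I_(rk degs 3) -> R := fun d => ((dg degs 3 d == n.+1)%:R * z 0 d)%:MP.
pose yv : 'I_(rk degs 2) -> R := fun c => al%:MP * y2 c + be%:MP * y3 c + - dmap D Z c.
pose w' : 'I_(rk degs 1) -> R := fun a => al%:MP * w2 a + be%:MP * w3 a.
have hdy : forall a, dmap D yv a = l' * wl a - l * w' a.
  move=> a; rewrite /yv dmapD dmapN dmapD !dmapM (dd hres) -hy2 -hy3 /l' /w'; ring.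
pose Hy := H n.+1 yv.
have hHy0 : forall c, (Hy c)@_0 = 0.
  move=> c; rewrite /Hy /H; case: ifP => hc; last by rewrite mcoeff0.
  rewrite mcoeff_pihomog /= mdeg0; case: eqP => // e.
  have ec : dg degs 2 c = n.+1 by lia.
  have := congr1 (fun M : 'rV[k]_(rk degs 2) => M 0 c) hz; rewrite !mxE ec eqxx !mul1r.
  rewrite /Pdeg mul_diag_mx => hzc.
  rewrite /yv !mcoeffD mcoeffN !mcoeffCM c0dmap hzc; apply/eqP; rewrite subr_eq0; apply/eqP.
  apply: eq_bigr => d _; rewrite !mxE /Z mcoeffC eqxx mulr1; ring.
have [q hq] : exists q : 'I_(rk degs 2) -> 'I_3 -> R, forall c, Hy c = \sum_i 'X_i * q c i.
  apply: (@fin_all_exists _ (fun _ => 'I_3 -> R) (fun c q => Hy c = \sum_i 'X_i * q i)) => c.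
  have [q hq] := decomp0 (Hy c); exists q; by rewrite -hq hHy0 mpolyC0 subr0.
have hdHy : forall a, dmap D Hy a = l' * H n wl a - l * H n w' a.
  move=> a; rewrite /Hy (H_dmap hres).
  rewrite (@H_ext _ _ _ _ _ (fun a => l' * wl a - l * w' a)) //.
  exact: H_lin.
have hdHy2 : forall a, dmap D Hy a = \sum_i 'X_i * dmap D (fun c => q c i) a.
  by move=> a; rewrite (@dmap_ext _ _ D _ _ (fun c => \sum_i 'X_i * q c i)) // dmapL.
pose lq : 3.-tuple R := [tuple p i *: l' | i < 3].
have lqE : forall i : 'I_3, lq`_i = p i *: l' by move=> i; rewrite nth_mktuple.
have hpiX : forall i : 'I_3, (comp_mpoly lq) 'X_i = (p i)%:MP * l'.
  by move=> i; rewrite comp_mpolyXU lqE mul_mpolyC.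
have hpil' : (comp_mpoly lq) l' = l'.
  rewrite /l' rmorphD !rmorphM /= !comp_mpolyC !hpiX.
  by rewrite !mulrA -!mpolyCM -mulrDl -mpolyCD hpl' mpolyC1 mul1r.
have hpil : (comp_mpoly lq) l = 0.
  rewrite (lin_decomp hl) raddf_sum /=.
  under eq_bigr do rewrite linearZ /= hpiX -mul_mpolyC mulrA -mpolyCM.
  by rewrite -mulr_suml -raddf_sum /= hpl mpolyC0 mul0r.
pose Yp : 'I_(rk degs 2) -> R := fun c => \sum_i (p i)%:MP * q c i.
have hV : forall a, (comp_mpoly lq) (H n wl a - dmap D Yp a) = 0.
  move=> a; have e := congr1 (comp_mpoly lq) (etrans (esym (hdHy a)) (hdHy2 a)).
  move: e; rewrite rmorphB !rmorphM /= hpil' hpil mul0r subr0 rmorph_sum /=.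
  under eq_bigr do rewrite rmorphM /= hpiX.
  move=> e; rewrite /Yp (dmapL D (fun i => (p i)%:MP) (fun i c => q c i)) rmorphB rmorph_sum /=.
  under eq_bigr do rewrite rmorphM /= comp_mpolyC.
  apply/eqP; move: hl'0; apply: contraR => ne.
  have : l' * ((comp_mpoly lq) (H n wl a) - \sum_i (p i)%:MP * (comp_mpoly lq) (dmap D (fun c => q c i) a)) = 0.
    rewrite mulrBr e mulr_sumr; apply/eqP; rewrite subr_eq0; apply/eqP; apply: eq_bigr => i _; ring.
  by move/eqP; rewrite mulf_eq0 (negbTE ne) orbF.
have [r hr] : exists r : 'I_(rk degs 1) -> 'I_3 -> R,
    forall a, H n wl a - dmap D Yp a = \sum_i ('X_i - lq`_i) * r a i.
  apply: (@fin_all_exists _ (fun _ => 'I_3 -> R)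
     (fun a r => H n wl a - dmap D Yp a = \sum_i ('X_i - lq`_i) * r i)) => a.
  have := inK_pi lq (H n wl a - dmap D Yp a); rewrite hV subr0.
  by move=> [r hr]; exists r.
have hphi1 : aug e0 (dmap D (H n wl)) = pihomog mdeg n (l * aug e0 v0).
  rewrite (@aug_ext _ _ e0 _ (H n (dmap D wl))); last by move=> b; exact: (H_dmap hres n wl b).
  rewrite (H_aug hres) (@aug_ext _ _ e0 _ (fun b => l * v0 b)) ?augM // => b.
have hphi2 : aug e0 (dmap D (H n wl)) =
    \sum_i ('X_i - lq`_i) * aug e0 (dmap D (fun a => r a i)).
  rewrite (@aug_ext _ _ e0 _ (fun b => dmap D (dmap D Yp) b +
       \sum_i ('X_i - lq`_i) * dmap D (fun a => r a i) b)); last first.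
    move=> b; rewrite -dmapL -dmapD; apply: dmap_ext => a; rewrite -hr; ring.
  rewrite augD augL (_ : aug e0 (dmap D (dmap D Yp)) = 0) ?add0r //.
  by rewrite /Defs.aug big1 // => b _; rewrite (dd hres) mul0r.
pose bb : R := if (1 <= n)%N then pihomog mdeg (n - 1) (s - aug e0 v0) else 0.
have hbb : pihomog mdeg n (l * (s - aug e0 v0)) = l * bb.
  by rewrite (pihomogM _ _ hl) /bb; case: ifP; rewrite ?mulr0.
apply: (nakayama4 (mu := fun i => 'X_i - lq`_i)
          (a := fun i => aug e0 (dmap D (fun a => r a i))) (m := l) (b := bb) hI hG).
- move=> i; rewrite mcoeffB lqE mcoeffZ hX0 (homog_c0 hl'h) // mulr0 subrr //.
- by move=> i; apply: (augdm hres).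
- exact: hl0.
- by rewrite /bb; case: ifP => _ //; apply: hIh.
rewrite -hphi2 hphi1 -hbb -pihomogD -mulrDr addrC subrK.
by rewrite pihomog_dE //; case: hG.
Qed.

End M.


Theorem lemmaA6 (k : fieldType) (I : {mpoly k[3]} -> Prop) (n : nat)
    (l s : {mpoly k[3]}) :
  homogeneous_ideal I -> m_primary I ->
  l \is 1.-homog ->
  socle_generator I s ->
  minimal_generator_of_degree I (l * s) n ->
  forall (degs : nat -> seq nat) (D : nat -> nat -> nat -> {mpoly k[3]})
         (e0 : nat -> {mpoly k[3]}),
    graded_free_resolution degs D e0 I ->
    (2 <= tor_dim degs D 2 n.+1)%N.
Proof.
move=> hI _ hl [S [_ [hS _] _ inS]] hG degs D e0 hres.
exact: (mainA hI hl (hS s inS) hG hres).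
Qed.
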